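(* Let $\Omega\subset\mathbb{R}^n$ be a domain and let $\mathcal{X}(\Omega)$ be a normed space of measurable functions on $\Omega$ satisfying properties (i) and (ii) below. Let $f\in\mathcal{X}(\Omega)$ and put $$\mu(\rho)=\sup_{x\in\Omega}\|f\|_{\mathcal{X},B_\rho(x)\cap\Omega}.$$ Then $\mu(\rho)\to0$ as $\rho\to0$.
   Context: For $\Omega_1\subset\Omega$ one sets $\|f\|_{\mathcal{X},\Omega_1}=\|f\chi_{\Omega_1}\|_{\mathcal{X},\Omega}$, where $\chi_{\Omega_1}$ is the characteristic function of $\Omega_1$. Properties of $\mathcal{X}(\Omega)$: - (i) If $g$ is measurable, $f\in\mathcal{X}(\Omega)$ and $|g|\le|f|$, then $g\in\mathcal{X}(\Omega)$ and $\|g\|_{\mathcal{X},\Omega}\le\|f\|_{\mathcal{X},\Omega}$. - (ii) If $f_k\in\mathcal{X}(\Omega)$ and $f_k\searrow0$ a.e., then $\|f_k\|_{\mathcal{X},\Omega}\to0$. *)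

(* Defs.v *)
From HB Require Import structures.
From mathcomp Require Import all_boot all_order all_algebra.
From mathcomp Require Import all_classical all_reals all_analysis.
Set Implicit Arguments. Unset Strict Implicit. Unset Printing Implicit Defensive.
Import Order.TTheory GRing.Theory Num.Theory.
Import numFieldNormedType.Exports.
Local Open Scope classical_set_scope.
Local Open Scope ring_scope.

Section Leb.
Variables (R : realType) (n : nat).

Definition box (a b : 'rV[R]_n) : set 'rV[R]_n :=
  [set x | forall i : 'I_n, a ord0 i <= x ord0 i <= b ord0 i].

Definition box_vol (a b : 'rV[R]_n) : R :=
  \prod_(i < n) Num.max (b ord0 i - a ord0 i) 0.

Definition leb_outer (A : set 'rV[R]_n) : \bar R :=
  ereal_inf [set s : \bar R | exists a b : nat -> 'rV[R]_n,
     A `<=` \bigcup_k box (a k) (b k) /\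
     s = (\sum_(k <oo) (box_vol (a k) (b k))%:E)%E].

Definition leb_measurable (A : set 'rV[R]_n) : Prop :=
  forall E : set 'rV[R]_n,
    leb_outer E = (leb_outer (E `&` A) + leb_outer (E `&` ~` A))%E.

Definition leb_null (A : set 'rV[R]_n) : Prop := leb_outer A = 0%E.

Definition leb_measurable_fun (D : set 'rV[R]_n) (g : 'rV[R]_n -> R) : Prop :=
  forall a : R, leb_measurable (D `&` [set x | a < g x]).

Definition ae_on (D : set 'rV[R]_n) (P : 'rV[R]_n -> Prop) : Prop :=
  exists N : set 'rV[R]_n, leb_null N /\ forall x, D x -> ~ N x -> P x.

Definition eball (x : 'rV[R]_n) (rho : R) : set 'rV[R]_n :=
  [set y | \sum_(i < n) (y ord0 i - x ord0 i) ^+ 2 < rho ^+ 2].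

Definition restr_norm (N : ('rV[R]_n -> R) -> R) (Om1 : set 'rV[R]_n)
  (f : 'rV[R]_n -> R) : R := N (fun x => \1_Om1 x * f x).

(* X(Omega) with N is a normed space of measurable functions on Omega
   (functions identified when equal a.e. on Omega) *)
Definition normed_function_space (Om : set 'rV[R]_n)
  (X : set ('rV[R]_n -> R)) (N : ('rV[R]_n -> R) -> R) : Prop :=
  (forall f, X f -> leb_measurable_fun Om f) /\
  X (fun _ => 0) /\
  (forall f g, X f -> X g -> X (fun x => f x + g x)) /\
  (forall (c : R) f, X f -> X (fun x => c * f x)) /\
  (forall (c : R) f, X f -> N (fun x => c * f x) = `|c| * N f) /\
  (forall f g, X f -> X g -> N (fun x => f x + g x) <= N f + N g) /\
  (forall f, X f -> (N f = 0 <-> ae_on Om (fun x => f x = 0))).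

Definition lattice_property (Om : set 'rV[R]_n)
  (X : set ('rV[R]_n -> R)) (N : ('rV[R]_n -> R) -> R) : Prop :=
  forall f g, X f -> leb_measurable_fun Om g ->
    (forall x, Om x -> `|g x| <= `|f x|) -> X g /\ N g <= N f.

Definition abs_cont_norm (Om : set 'rV[R]_n)
  (X : set ('rV[R]_n -> R)) (N : ('rV[R]_n -> R) -> R) : Prop :=
  forall fk : nat -> 'rV[R]_n -> R, (forall k, X (fk k)) ->
    ae_on Om (fun x => (forall k, fk k.+1 x <= fk k x) /\ (fk ^~ x) @ \oo --> (0:R)) ->
    (fun k => N (fk k)) @ \oo --> (0:R).

End Leb.

(* Main.v *)
Require Import Defs.
From HB Require Import structures.
From mathcomp Require Import all_boot all_order all_algebra.
From mathcomp Require Import all_classical all_reals all_analysis.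
Import Order.TTheory GRing.Theory Num.Theory.
Import numFieldNormedType.Exports.
Local Open Scope classical_set_scope.
Local Open Scope ring_scope.
Section Outer.
Variables (R : realType) (n' : nat).
Local Notation n := n'.+1.
Local Notation V := 'rV[R]_n.

Definition TT := g_sigma_algebraType (setT : set (set V)).

Definition bmu (A : set TT) : \bar R :=
  ereal_inf [set x | exists a b : V, A `<=` box a b /\ x = (box_vol a b)%:E].

Lemma box_vol_ge0 (a b : V) : 0 <= box_vol a b.
Proof. by rewrite /box_vol; apply: prodr_ge0 => i _; rewrite le_max lexx orbT. Qed.

Local Open Scope ereal_scope.

Lemma bmu_ge0 A : 0 <= bmu A.
Proof.
apply: le_ereal_inf_tmp => _ [a [b [_ ->]]]; rewrite lee_fin; exact: box_vol_ge0.
Qed.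

Lemma bmu0 : bmu set0 = 0.
Proof.
apply/eqP; rewrite eq_le bmu_ge0 andbT.
apply: ereal_inf_lbound; exists 0%R, 0%R; split => //.
by rewrite /box_vol big_ord_recl !mxE subrr maxxx mul0r.
Qed.

Lemma leb_outer_ext (A : set V) : leb_outer A = mu_ext bmu A.
Proof.
apply/eqP; rewrite eq_le; apply/andP; split.
- apply: le_ereal_inf_tmp => _ [F [mF AF] <-].
  have [[k Fk]|] := pselect (exists k, bmu (F k) = +oo).
    rewrite (eseries_pinfty _ _ Fk) ?leey // => m _.
    by rewrite -ltNye (lt_le_trans _ (bmu_ge0 _)).
  move=> /forallNP Fk.
  apply/lee_addgt0Pr => e e0.
  have : forall k, exists ab : V * V, F k `<=` box ab.1 ab.2 /\
     (box_vol ab.1 ab.2)%:E < bmu (F k) + (e / (2 ^ k.+1)%:R)%:E.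
    move=> k.
    have fk : bmu (F k) \is a fin_num.
      by rewrite ge0_fin_numE ?bmu_ge0 // ltey; apply/eqP/Fk.
    have e'0 : (0 < e / (2 ^ k.+1)%:R)%R by rewrite divr_gt0 // ltr0n expn_gt0.
    have [x [a [b [Fab ->]]] hx] := lb_ereal_inf_adherent e'0 fk.
    by exists (a, b).
  move/choice => [ab Hab].
  apply: (@le_trans _ _ (\sum_(k <oo) (box_vol (ab k).1 (ab k).2)%:E)).
    apply: ereal_inf_lbound; exists (fun k => (ab k).1), (fun k => (ab k).2).
    split => //.
    by move=> x /AF [k _ Fkx]; exists k => //; exact: (Hab k).1.
  apply: le_trans (epsilon_trick _ _ _); last 2 first.
  + by move=> k; exact: bmu_ge0.
  + exact: ltW.
  apply: lee_nneseries => [k _ _|k _]; first by rewrite lee_fin box_vol_ge0.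
  exact/ltW/(Hab k).2.
- apply: le_ereal_inf_tmp => s [a [b [Acov ->]]].
  apply: (@le_trans _ _ (\sum_(k <oo) bmu (box (a k) (b k)))).
    apply: ereal_inf_lbound; exists (fun k => box (a k) (b k)) => //; split => //.
    by move=> k; exact: sub_sigma_algebra.
  apply: lee_nneseries => [k _ _|k _]; first exact: bmu_ge0.
  rewrite /bmu; apply: ereal_inf_lbound => /=. exists (a k). exists (b k). split. done. done.
Qed.

Lemma lo0 : leb_outer (set0 : set V) = 0.
Proof. by rewrite leb_outer_ext mu_ext0 //; [exact: bmu0 | exact: bmu_ge0]. Qed.
Lemma lo_ge0 (A : set V) : 0 <= leb_outer A.
Proof. by rewrite leb_outer_ext; apply: mu_ext_ge0; exact: bmu_ge0. Qed.
Lemma lo_le : {homo (@leb_outer R n) : A B / A `<=` B >-> A <= B}.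
Proof. by move=> A B AB; rewrite !leb_outer_ext; exact: le_mu_ext. Qed.
Lemma lo_sub : sigma_subadditive (@leb_outer R n).
Proof.
move=> F; rewrite leb_outer_ext.
under eq_eseriesr do rewrite leb_outer_ext.
by apply: mu_ext_sigma_subadditive; exact: bmu_ge0.
Qed.

HB.instance Definition _ := isOuterMeasure.Build R V (@leb_outer R n)
  lo0 lo_ge0 lo_le lo_sub.

End Outer.
From mathcomp Require Import lra.
Lemma mm (R : realType) (a b c : R) :
  Num.max (b - Num.max a c) 0 + Num.max (Num.min b c - a) 0 = Num.max (b - a) 0.
Proof.
rewrite !maxEle !minEle.
repeat case: ifPn; rewrite -?ltNge; try lra; intros; lra.
Qed.

Section Half.
Variables (R : realType) (n' : nat).
Local Notation n := n'.+1.
Local Notation V := 'rV[R]_n.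

Definition upd (v : V) (i : 'I_n) (x : R) : V :=
  \row_j (if j == i then x else v ord0 j).

Lemma vol_split (a b : V) i c :
  box_vol (upd a i (Num.max (a ord0 i) c)) b +
  box_vol a (upd b i (Num.min (b ord0 i) c)) = box_vol a b.
Proof.
rewrite /box_vol (bigD1 i) //= [in X in _ + X](bigD1 i) //= [in RHS](bigD1 i) //=.
rewrite !mxE eqxx.
have -> : \prod_(j < n | j != i) Num.max (b ord0 j - upd a i (Num.max (a ord0 i) c) ord0 j) 0
   = \prod_(j < n | j != i) Num.max (b ord0 j - a ord0 j) 0.
  by apply: eq_bigr => j /negbTE ji; rewrite !mxE ji.
have -> : \prod_(j < n | j != i) Num.max (upd b i (Num.min (b ord0 i) c) ord0 j - a ord0 j) 0
   = \prod_(j < n | j != i) Num.max (b ord0 j - a ord0 j) 0.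
  by apply: eq_bigr => j /negbTE ji; rewrite !mxE ji.
by rewrite -mulrDl mm.
Qed.

Lemma half_meas i c : leb_measurable [set z : V | c < z ord0 i].
Proof.
apply: (@le_caratheodory_measurable R V (@leb_outer R n)) => E.
apply: le_ereal_inf_tmp => _ [a [b [Ecov ->]]].
apply: (@le_trans _ _ ((\sum_(k <oo) (box_vol (upd (a k) i (Num.max (a k ord0 i) c)) (b k))%:E) + (\sum_(k <oo) (box_vol (a k) (upd (b k) i (Num.min (b k ord0 i) c)))%:E))%E).
  apply: leeD; apply: ereal_inf_lbound.
  - exists (fun k => upd (a k) i (Num.max (a k ord0 i) c)), b; split => //.
    move=> z [Ez Hz]; have [k _ zk] := Ecov z Ez; exists k => // j.
    rewrite !mxE; case: eqP => [->|_]; last exact: zk.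
    have := zk i; rewrite ge_max; move: Hz => /= Hz [/andP[-> ->]] /=.
    by rewrite ltW.
  - exists a, (fun k => upd (b k) i (Num.min (b k ord0 i) c)); split => //.
    move=> z [Ez Hz]; have [k _ zk] := Ecov z Ez; exists k => // j.
    rewrite !mxE; case: eqP => [->|_]; last exact: zk.
    have := zk i; rewrite le_min; move: Hz => /= /negP; rewrite -leNgt => Hz /andP[-> ->].
    by rewrite Hz.
rewrite -nneseriesD; last 2 first.
- by move=> k _; rewrite lee_fin box_vol_ge0.
- by move=> k _; rewrite lee_fin box_vol_ge0.
apply: lee_nneseries => [k _ _|k _].
  by rewrite adde_ge0 // lee_fin box_vol_ge0.
by rewrite -EFinD vol_split.
Qed.

End Half.
Lemma xl1 (R : realType) (b p t : R) : 0 < t -> b <= p -> b - t < p.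
Proof. move=> ? ?; lra. Qed.
Lemma xl2 (R : realType) (b p t : R) : p + t < b -> b - t < p -> False.
Proof. move=> ? ?; lra. Qed.

Section Meas.
Variables (R : realType) (n' : nat).
Local Notation n := n'.+1.
Local Notation V := 'rV[R]_n.
Local Notation M := (@leb_measurable R n).
Local Notation lmf := (@leb_measurable_fun R n).

Lemma MC A : M A -> M (~` A).
Proof. exact: (@caratheodory_measurable_setC R V (@leb_outer R n) A). Qed.
Lemma MI A B : M A -> M B -> M (A `&` B).
Proof. exact: (@caratheodory_measurable_setI R V (@leb_outer R n) A B). Qed.
Lemma MU A B : M A -> M B -> M (A `|` B).
Proof. exact: (@caratheodory_measurable_setU R V (@leb_outer R n) A B). Qed.
Lemma M0 : M set0.
Proof. exact: (@caratheodory_measurable_set0 R V (@leb_outer R n)). Qed.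
Lemma MT : M setT.
Proof. by rewrite -setC0; apply: MC; exact: M0. Qed.
Lemma Mbigcup (F : nat -> set V) : (forall k, M (F k)) -> M (\bigcup_k F k).
Proof. exact: (@caratheodory_measurable_bigcup R V (@leb_outer R n) F). Qed.
Lemma Mbigcap (F : nat -> set V) : (forall k, M (F k)) -> M (\bigcap_k F k).
Proof.
move=> MF; rewrite -[X in M X]setCK setC_bigcap; apply: MC.
by apply: Mbigcup => k; apply: MC.
Qed.

Lemma Mfin (A : 'I_n -> set V) : (forall i, M (A i)) -> M [set z | forall i, A i z].
Proof.
move=> MA.
have H : forall s : seq 'I_n, M [set z | forall i, i \in s -> A i z].
  elim => [|i s IH].
    rewrite (_ : [set z | _] = setT); first exact: MT.
    by apply/seteqP; split => z //= _ i.
  rewrite (_ : [set z | _] = A i `&` [set z | forall j, j \in s -> A j z]).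
    exact: MI.
  apply/seteqP; split => z /=.
    by move=> h; split => [|j js]; apply: h; rewrite inE ?eqxx ?js ?orbT.
  by move=> [Ai h] j; rewrite inE => /orP [/eqP ->|]; [|exact: h].
rewrite (_ : [set z | _] = [set z | forall i, i \in enum 'I_n -> A i z]).
  exact: H.
apply/seteqP; split => z /= h i; [by move=> _; apply: h | by apply: h; rewrite mem_enum].
Qed.

Lemma lmf_ge D (phi : V -> R) : M D -> lmf D phi ->
  forall b, M (D `&` [set z | b <= phi z]).
Proof.
move=> MD mphi b.
rewrite (_ : _ `&` _ = \bigcap_k (D `&` [set z | b - k.+1%:R^-1 < phi z])).
  by apply: Mbigcap => k; exact: mphi.
apply/seteqP; split => z /=.
  move=> [Dz bz] k _; split => //.
  have : 0 < k.+1%:R^-1 :> R by rewrite invr_gt0 ltr0n.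
  by move=> ht; apply: xl1.
move=> h; have [Dz _] := h 0%N I; split => //.
rewrite leNgt; apply/negP => /ltr_add_invr [k hk].
have [_ ] := h k I; exact: xl2.
Qed.

End Meas.

From mathcomp Require Import lra.
Lemma xl3 {R : realType} {a p s : R} : a < p + s -> a - s < p.
Proof. move=> ?; lra. Qed.
Lemma xl4 {R : realType} {a r s : R} : a - s < r -> a - r < s.
Proof. move=> ?; lra. Qed.
Lemma xl5 {R : realType} {a r p s : R} : r < p -> a - r < s -> a < p + s.
Proof. move=> ? ?; lra. Qed.
Section Meas2.
Variables (R : realType) (n' : nat).
Local Notation n := n'.+1.
Local Notation V := 'rV[R]_n.
Local Notation M := (@leb_measurable R n).
Local Notation lmf := (@leb_measurable_fun R n).
Lemma lmf_neg D (phi : V -> R) : M D -> lmf D phi -> lmf D (fun z => - phi z).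
Proof.
move=> MD mphi a.
rewrite (_ : _ `&` _ = D `&` ~` (D `&` [set z | - a <= phi z])).
  by apply: MI => //; apply: MC; exact: lmf_ge.
apply/seteqP; split => z /=.
  by move=> [Dz h]; split => // -[_]; lra.
move=> [Dz h]; split => //.
rewrite ltNge; apply/negP => h'; apply: h; split => //; lra.
Qed.

Lemma lmf_add D (phi psi : V -> R) : lmf D phi -> lmf D psi ->
  lmf D (fun z => phi z + psi z).
Proof.
move=> mphi mpsi a.
pose G k := if @unpickle rat k is Some q then
   (D `&` [set z | ratr q < phi z]) `&` (D `&` [set z | a - ratr q < psi z])
   else set0.
rewrite (_ : _ `&` _ = \bigcup_k G k).
  apply: Mbigcup => k; rewrite /G; case: (unpickle k) => [q|]; last exact: M0.
  by apply: MI; [exact: mphi | exact: mpsi].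
apply/seteqP; split => z /=.
  move=> [Dz h].
  have := xl3 h.
  move=> /rat_in_itvoo [q]; rewrite in_itv /= => /andP [h1 h2].
  exists (pickle q); first by [].
  rewrite /G pickleK; split; split => //; exact: xl4.
move=> [k _]; rewrite /G; case: (unpickle k) => [q|] // [[Dz h1] [_ h2]].
by split => //; apply: xl5 h1 h2.
Qed.

Lemma lmf_cst D c : M D -> lmf D (fun _ => c).
Proof.
move=> MD a; have [ac|ca] := ltP a c.
  rewrite (_ : _ `&` _ = D) //; apply/seteqP; split => z /=; [by case|by []].
rewrite (_ : _ `&` _ = set0); first exact: M0.
apply/seteqP; split => z //= [_]; lra.
Qed.

Lemma lmf_sqr D (phi : V -> R) : M D -> lmf D phi -> lmf D (fun z => phi z ^+ 2).
Proof.
move=> MD mphi a; have [a0|a0] := ltP a 0.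
  rewrite (_ : _ `&` _ = D) //; apply/seteqP; split => z /=; first by case.
  by move=> Dz; split => //; apply: lt_le_trans a0 _; exact: sqr_ge0.
rewrite (_ : _ `&` _ = (D `&` [set z | Num.sqrt a < phi z]) `|`
                        (D `&` [set z | Num.sqrt a < - phi z])).
  by apply: MU; [exact: mphi | exact: lmf_neg].
have key : forall x : R, (a < x ^+ 2) = (Num.sqrt a < `|x|).
  move=> x; apply/idP/idP => h.
    by rewrite -sqrtr_sqr ltr_sqrt //; apply: le_lt_trans h.
  have hx : 0 < x ^+ 2.
    by rewrite exprn_even_gt0 //= -normr_gt0; apply: le_lt_trans h; exact: sqrtr_ge0.
  by rewrite -(ltr_sqrt _ hx) sqrtr_sqr.
apply/seteqP; split => z /=.
  by move=> [Dz]; rewrite key ltr_normr => /orP [h|h]; [left|right].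
by move=> [] [Dz h]; split => //; rewrite key ltr_normr h ?orbT.
Qed.

Lemma lmf_coord i : lmf setT (fun z : V => z ord0 i).
Proof. by move=> a; rewrite setTI; exact: half_meas. Qed.

Lemma lmf_sum (F : 'I_n -> V -> R) : (forall i, lmf setT (F i)) ->
  lmf setT (fun z => \sum_(i < n) F i z).
Proof.
move=> mF.
have H : forall s : seq 'I_n, lmf setT (fun z => \sum_(i <- s) F i z).
  elim => [|i s IH].
    rewrite (_ : (fun z => _) = (fun _ => 0)); first exact/lmf_cst/MT.
    by apply/funext => z; rewrite big_nil.
  rewrite (_ : (fun z => _) = (fun z => F i z + \sum_(j <- s) F j z)).
    exact: lmf_add.
  by apply/funext => z; rewrite big_cons.
exact: H.
Qed.

Lemma M_of_lmf (phi : V -> R) a : lmf setT phi -> M [set z | a < phi z].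
Proof. by move=> h; rewrite -[X in M X]setTI; exact: h. Qed.

Lemma lmf_dist2 (x : V) : lmf setT (fun z : V => \sum_(i < n) (z ord0 i - x ord0 i) ^+ 2).
Proof.
apply: lmf_sum => i; apply: lmf_sqr; first exact: MT.
by apply: lmf_add; [exact: lmf_coord | exact/lmf_cst/MT].
Qed.

Lemma M_eball (x : V) rho : M (eball x rho).
Proof.
rewrite (_ : eball x rho = [set z | - rho ^+ 2 <
   - \sum_(i < n) (z ord0 i - x ord0 i) ^+ 2]).
  by apply: M_of_lmf; apply: lmf_neg; [exact: MT | exact: lmf_dist2].
by apply/seteqP; split => z /=; rewrite ltrN2.
Qed.

End Meas2.

Set Implicit Arguments. Unset Strict Implicit.
Lemma indM1 {R : realType} {T : Type} (A : set T) z (y : R) : A z -> \1_A z * y = y.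
Proof. by move=> Az; rewrite indicE mem_set // mul1r. Qed.
Lemma indM0 {R : realType} {T : Type} (A : set T) z (y : R) : ~ A z -> \1_A z * y = 0.
Proof. by move=> Az; rewrite indicE memNset // mul0r. Qed.

Section Main.
Variables (R : realType) (n' : nat).
Local Notation n := n'.+1.
Local Notation V := 'rV[R]_n.
Local Notation M := (@leb_measurable R n).
Local Notation lmf := (@leb_measurable_fun R n).
Variables (Om : set V) (X : set (V -> R)) (N : (V -> R) -> R).
Hypotheses (hN : normed_function_space Om X N) (hL : lattice_property Om X N)
  (hA : abs_cont_norm Om X N).
Variable f : V -> R.
Hypothesis Xf : X f.

Lemma N_ge0 g : X g -> 0 <= N g.
Proof.
case: hN => _ [_ [_ [Xsc [Nsc [Ntri _]]]]] Xg.
have h1 := Nsc 0 g Xg; rewrite normr0 mul0r in h1.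
have h2 := Ntri g _ Xg (Xsc (-1) g Xg).
rewrite (_ : (fun x => g x + -1 * g x) = (fun x => 0 * g x)) in h2; last first.
  by apply/funext => x; rewrite mulN1r mul0r subrr.
rewrite h1 Nsc // normrN normr1 mul1r in h2.
lra.
Qed.

Lemma MOm : M Om.
Proof.
case: hN => mX [X0 _].
have := mX _ X0 (-1).
rewrite (_ : Om `&` _ = Om) //; apply/seteqP; split => z /=; first by case.
by move=> Oz; split => //; rewrite ltrN10.
Qed.

Lemma lmf_abs D (phi : V -> R) : M D -> lmf D phi -> lmf D (fun z => `|phi z|).
Proof.
move=> MD mphi a.
rewrite (_ : _ `&` _ = (D `&` [set z | a < phi z]) `|` (D `&` [set z | a < - phi z])).
  by apply: MU; [exact: mphi | exact: lmf_neg].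
apply/seteqP; split => z /=.
  by move=> [Dz]; rewrite ltr_normr => /orP [h|h]; [left|right].
by move=> [] [Dz h]; split => //; rewrite ltr_normr h ?orbT.
Qed.

Lemma lmf_ind C h : M C -> lmf Om h -> lmf Om (fun z => \1_(C `&` Om) z * h z).
Proof.
move=> mC mh a; have [a0|a0] := leP 0 a.
  rewrite (_ : _ `&` _ = C `&` (Om `&` [set z | a < h z])).
    by apply: MI => //; exact: mh.
  apply/seteqP; split => z /= [Oz].
    have [[Cz _]|nC] := pselect ((C `&` Om) z).
      by rewrite indM1 //; split.
    by rewrite indM0 // => h'; exfalso; lra.
  by move=> [Oz' h']; rewrite indM1 //.
rewrite (_ : _ `&` _ = (Om `&` [set z | a < h z]) `|` (Om `&` ~` C)).
  by apply: MU; [exact: mh | apply: MI; [exact: MOm | exact: MC]].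
apply/seteqP; split => z /=.
  move=> [Oz]; have [[Cz _]|nC] := pselect ((C `&` Om) z).
    by rewrite indM1 // => h'; left.
  by move=> _; right; split => // Cz; apply: nC.
move=> [] [Oz h']; split => //.
  have [[Cz _]|nC] := pselect ((C `&` Om) z); first by rewrite indM1.
  by rewrite indM0.
by rewrite indM0 // => -[].
Qed.

Lemma mf : lmf Om f.
Proof. by case: hN => mX _; exact: mX. Qed.

Lemma X_abs : X (fun z => `|f z|).
Proof.
have [] // := hL Xf (lmf_abs MOm mf).
by move=> x _; rewrite normr_id.
Qed.

Definition hC C := fun z => \1_(C `&` Om) z * `|f z|.
Definition gB B := fun z => \1_(B `&` Om) z * f z.

Lemma hC_ge0 C z : 0 <= hC C z.
Proof.
rewrite /hC; have [h|h] := pselect ((C `&` Om) z); first by rewrite indM1.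
by rewrite indM0.
Qed.

Lemma X_hC C : M C -> X (hC C).
Proof.
move=> mC; have [] // := @hL _ (hC C) X_abs (lmf_ind mC (lmf_abs MOm mf)).
move=> x _; rewrite /hC; have [h|h] := pselect ((C `&` Om) x).
  by rewrite indM1.
by rewrite indM0 // normr0.
Qed.

Lemma X_gB B : M B -> X (gB B) /\ N (gB B) <= N f.
Proof.
move=> MB; apply: @hL f (gB B) Xf (lmf_ind MB mf) _.
move=> x _; rewrite /gB; have [h|h] := pselect ((B `&` Om) x).
  by rewrite indM1.
by rewrite indM0 // normr0.
Qed.

Lemma gB_le_hC B C : M B -> M C -> B `<=` C -> N (gB B) <= N (hC C).
Proof.
move=> MB mC BC; have [] // := @hL _ (gB B) (X_hC mC) (lmf_ind MB mf).
move=> x _; rewrite /gB /hC; have [[Bx Ox]|h] := pselect ((B `&` Om) x).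
  by rewrite !indM1 //; [rewrite normr_id | split => //; exact: BC].
by rewrite indM0 // normr0.
Qed.

Lemma decr_le (C : nat -> set V) : (forall k, C k.+1 `<=` C k) ->
  forall k m, (k <= m)%N -> C m `<=` C k.
Proof.
move=> dC k; elim => [|m IH].
  by rewrite leqn0 => /eqP ->.
rewrite leq_eqVlt => /orP [/eqP -> //|]; rewrite ltnS => km.
by apply: subset_trans (IH km); exact: dC.
Qed.

Lemma small_seq (C : nat -> set V) (Z : set V) : (forall k, M (C k)) ->
  (forall k, C k.+1 `<=` C k) -> leb_null Z ->
  (forall z, ~ Z z -> exists k, ~ C k z) ->
  forall e, 0 < e -> exists k, N (hC (C k)) < e.
Proof.
move=> mC dC nZ HZ e e0.
have := hA (fun k => X_hC (mC k)) _.
have H : ae_on Om (fun x => (forall k, hC (C k.+1) x <= hC (C k) x) /\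
     (fun k => hC (C k) x) @ \oo --> (0:R)).
  exists Z; split => // z Oz Zz; split.
    move=> k; rewrite /hC; have [[Cz _]|h] := pselect ((C k.+1 `&` Om) z).
      by rewrite !indM1 //; split => //; exact: dC.
    by rewrite indM0 //; exact: (hC_ge0 (C k) z).
  have [k nk] := HZ z Zz.
  apply: cvg_near_cst; exists k => // m /= km.
  rewrite /hC indM0 // => -[Cm _]; apply: nk; exact: (decr_le dC km).
move=> /(_ H) /cvgrPdist_lt /(_ e e0) [K _ HK].
exists K; have := HK K (leqnn K); rewrite /= sub0r normrN.
by apply: le_lt_trans; exact: ler_norm.
Qed.

Definition cube (y : V) (r : R) := [set z : V | forall i, `|z ord0 i - y ord0 i| < r].
Definition tail (m : nat) := [set z : V | exists i, m%:R < `|z ord0 i|].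

Lemma M_cube y r : M (cube y r).
Proof.
apply: (@Mfin R n' (fun i => [set z : V | `|z ord0 i - y ord0 i| < r])) => i.
rewrite (_ : [set z | _] = [set z : V | - r < - `|z ord0 i - y ord0 i|]).
  apply: M_of_lmf; apply: lmf_neg; first exact: MT.
  apply: lmf_abs; first exact: MT.
  by apply: lmf_add; [exact: lmf_coord | exact/lmf_cst/MT].
by apply/seteqP; split => z /=; rewrite ltrN2.
Qed.

Lemma M_tail m : M (tail m).
Proof.
rewrite (_ : tail m = ~` [set z | forall i, (~` [set z : V | m%:R < `|z ord0 i|]) z]).
  apply: MC; apply: (@Mfin R n' (fun i => ~` [set z : V | m%:R < `|z ord0 i|])) => i.
  apply: MC; apply: M_of_lmf; apply: lmf_abs; [exact: MT | exact: lmf_coord].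
apply/seteqP; split => z /=.
  by move=> [i hi] h; exact: (h i).
move=> h; have [//|nh] := pselect (exists i, m%:R < `|z ord0 i|).
by exfalso; apply: h => i hi; apply: nh; exists i.
Qed.

Lemma coord_le_sum (F : 'I_n -> R) i : (forall j, 0 <= F j) -> F i <= \sum_(j < n) F j.
Proof.
move=> F0; rewrite (bigD1 i) //= lerDl; exact: sumr_ge0.
Qed.

Lemma ball_sub x rho : 0 < rho -> eball x rho `<=` cube x rho.
Proof.
move=> rho0 z /= hz i.
have h1 : (z ord0 i - x ord0 i) ^+ 2 < rho ^+ 2.
  apply: le_lt_trans hz; apply: (@coord_le_sum (fun j => (z ord0 j - x ord0 j) ^+ 2) i).
  by move=> j; exact: sqr_ge0.
rewrite -(ltr_pXn2r (_ : (0 < 2)%N)) ?nnegrE ?normr_ge0 ?ltW //.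
by rewrite real_normK ?num_real.
Qed.

Lemma null_pt (y : V) : leb_null [set y].
Proof.
rewrite /leb_null; apply/eqP; rewrite eq_le lo_ge0 andbT.
apply: ereal_inf_lbound => /=; exists (fun _ => y), (fun _ => y); split.
  by move=> z ->; exists 0%N => //= i; rewrite lexx.
rewrite eseries0 // => k _ _.
by rewrite /box_vol big_ord_recl subrr maxxx mul0r.
Qed.

Lemma null0 : leb_null (set0 : set V).
Proof. exact: lo0. Qed.

Lemma local_small y e : 0 < e -> exists r, 0 < r /\ N (hC (cube y r)) < e.
Proof.
move=> e0.
have := @small_seq (fun k => cube y k.+1%:R^-1) [set y] (fun k => M_cube _ _) _ (null_pt y) _ e e0.
move=> /(_ _ _) [].
- move=> k z /= h i; apply: lt_le_trans (h i) _.
  by rewrite lef_pV2 ?posrE ?ltr0n // ler_nat.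
- move=> z /= zy.
  have [[i hi]|nh] := pselect (exists i, z ord0 i != y ord0 i); last first.
    exfalso; apply: zy; apply/rowP => i.
    have [//|hne] := eqVneq (z ord0 i) (y ord0 i).
    by exfalso; apply: nh; exists i.
  have : 0 < `|z ord0 i - y ord0 i| by rewrite normr_gt0 subr_eq0.
  move=> /ltr_add_invr [k]; rewrite add0r => hk.
  exists k => h; have := h i; rewrite ltNge => /negP; apply; exact: ltW.
- by move=> k hk; exists k.+1%:R^-1; split => //; rewrite invr_gt0 ltr0n.
Qed.
Lemma xl6 {a b rho r : R} : a < rho -> b < r / 2 -> rho < r / 2 -> a + b < r.
Proof. move=> ? ? ?; lra. Qed.
Lemma xl7 {m x z d rho : R} : m + 1 < x -> x <= z + d -> d < rho -> rho < 1 -> m < z.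
Proof. move=> ? ? ? ?; lra. Qed.
Lemma tail_small e : 0 < e -> exists m, N (hC (tail m)) < e.
Proof.
move=> e0.
have := @small_seq tail set0 M_tail _ null0 _ e e0.
move=> /(_ _ _) [] //.
- move=> k z /= [i hi]; exists i; apply: lt_trans hi; by rewrite ltr_nat.
- move=> z _.
  set s := \sum_(i < n) `|z ord0 i|.
  exists (Num.Def.archi_bound s) => -[i hi].
  have hs : `|z ord0 i| <= s by apply: (@coord_le_sum (fun j => `|z ord0 j|) i).
  have h : s < (Num.Def.archi_bound s)%:R.
    by apply: archi_boundP; apply: sumr_ge0 => j _.
  have := lt_trans hi (le_lt_trans hs h); by rewrite ltxx.
- by move=> k hk; exists k.
Qed.

Hypothesis Om0 : Om !=set0.

Lemma main_conv :
  (fun rho : R => sup [set restr_norm N (eball x rho `&` Om) f | x in Om])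
    @ 0^'+ --> (0:R).
Proof.
apply/cvgrPdist_le => e e0.
have [m hm] := tail_small e0.
pose K := [set v : V | forall i, (fun _ : 'I_n => `[- (m%:R + 1), m%:R + 1]%classic) i (v ord0 i)].
have cK : compact K by apply: rV_compact => i; exact: segment_compact.
have HK := (compact_near_coveringP K).1 cK R (0^'+)
   (fun rho x' => N (gB (eball x' rho)) <= e) (at_right_proper_filter 0).
have {HK} HK : \forall rho \near 0^'+, K `<=` (fun x' => N (gB (eball x' rho)) <= e).
  apply: HK => y Ky.
  have [r [r0 hr]] := local_small y e0.
  have r20 : 0 < r / 2 by rewrite divr_gt0.
  exists (ball y (r / 2), [set rho | 0 < rho < r / 2]).
    split; first exact: nbhsx_ballx.
    near=> rho; apply/andP; split; near: rho; [exact: nbhs_right_gt | exact: nbhs_right_lt].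
  move=> [x' rho] [/= bx /andP [rho0 rhor]].
  apply/ltW; apply: le_lt_trans hr.
  apply: gB_le_hC; [exact: M_eball | exact: M_cube |].
  move=> z /(ball_sub rho0) hz i.
  have bxi : `|y ord0 i - x' ord0 i| < r / 2.
    exact: (bx.2 ord0 i).
  rewrite (_ : z ord0 i - y ord0 i = (z ord0 i - x' ord0 i) + (x' ord0 i - y ord0 i)); last first.
    by rewrite addrA subrK.
  apply: le_lt_trans (ler_normD _ _) _; rewrite distrC in bxi.
  exact: xl6 (hz i) bxi rhor.
near=> rho.
have rho0 : 0 < rho by near: rho; exact: nbhs_right_gt.
have rho1 : rho < 1 by near: rho; apply: nbhs_right_lt; exact: ltr01.
have HKr : K `<=` (fun x' => N (gB (eball x' rho)) <= e) by near: rho; exact: HK.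
set S := [set _ | _ in _].
have ubS : ubound S e.
  move=> _ [x Ox <-].
  have [Kx|nK] := pselect (K x); first exact: HKr.
  have [i hi] : exists i, m%:R + 1 < `|x ord0 i|.
    have [//|nh] := pselect (exists i, m%:R + 1 < `|x ord0 i|).
    exfalso; apply: nK => i /=; rewrite in_itv /= -ler_norml leNgt.
    by apply/negP => h; apply: nh; exists i.
  apply/ltW; apply: le_lt_trans hm; apply: gB_le_hC; [exact: M_eball | exact: M_tail|].
  move=> z /(ball_sub rho0) hz; exists i.
  have := ler_normD (z ord0 i) (x ord0 i - z ord0 i).
  rewrite addrC subrK distrC => h.
  exact: xl7 hi h (hz i) rho1.
have S0 : S !=set0.
  by case: Om0 => x Ox; exists (restr_norm N (eball x rho `&` Om) f); exists x.
have hsup : sup S <= e := ge_sup S0 ubS.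
have sup0 : 0 <= sup S.
  case: Om0 => x Ox; have hx := X_gB (M_eball R n' x rho).
  apply: le_trans (N_ge0 hx.1) _.
  apply: sup_upper_bound; [split; [exact: S0 | exists e; exact: ubS] | by exists x].
by rewrite sub0r normrN ger0_norm.
Unshelve. all: end_near.
Qed.
End Main.

Theorem lemma2p3 (R : realType) (n : nat) (Om : set 'rV[R]_n)
  (X : set ('rV[R]_n -> R)) (N : ('rV[R]_n -> R) -> R) :
  open Om -> connected Om -> Om !=set0 ->
  normed_function_space Om X N ->
  lattice_property Om X N ->
  abs_cont_norm Om X N ->
  forall f : 'rV[R]_n -> R, X f ->
  (fun rho : R => sup [set restr_norm N (eball x rho `&` Om) f | x in Om])
    @ 0^'+ --> (0:R).
Proof.
move=> _ _ Om0 hN hL hA f Xf.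
destruct n as [|n'].
- exfalso.
  case: hN => _ [X0 [_ [_ [Nsc [_ Nae]]]]].
  have N00 : N (fun _ => 0) = 0.
    have h := Nsc 0 (fun _ => 0) X0; rewrite normr0 !mul0r in h.
    by rewrite -[RHS]h; f_equal; apply/funext => x; rewrite ?mul0r.
  have [Z [nZ _]] := (Nae _ X0).1 N00.
  have : (1 <= leb_outer Z)%E.
    apply: le_ereal_inf_tmp => _ [a [b [_ ->]]].
    apply: le_trans (@nneseries_lim_ge R _ xpredT 0 1 _).
      by rewrite big_nat1 /box_vol big_ord0.
    by move=> k _ _; rewrite /box_vol big_ord0 lee_fin ler01.
  by rewrite nZ lee_fin ler10.
- exact: (main_conv hN hL hA Xf Om0).
Qed.
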